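(* Let $(X,d)$ be a metric space. The following are equivalent: (i) $(X,d)$ is ultrametric; (ii) for every $W\subseteq X$ and every $\varepsilon>0$, $$\mathcal M^*_\varepsilon(W)=\hat{\mathcal N}^X_\varepsilon(W)=\hat{\mathcal N}_\varepsilon(W)=\hat{\mathcal M}_\varepsilon(W);$$ (iii) for every compact $W\subseteq X$ and every $\varepsilon>0$, $\mathcal N_\varepsilon(W)=\mathcal M_\varepsilon(W)$.
   Context: $(X,d)$ is ultrametric if $d(x,y)\le\max\{d(x,z),d(z,y)\}$ for all $x,y,z$. Closed balls: $B(c,r)=\{x:d(x,c)\le r\}$. $C$ is an $\varepsilon$-net for $W$ if $W\subseteq\bigcup_{c\in C}B(c,\varepsilon)$. $A$ is $\varepsilon$-distinguishable if $d(x,y)>\varepsilon$ for distinct $x,y\in A$. For a totally bounded $W$, the covering number $\mathcal N_\varepsilon(W)$ is the smallest cardinality of a subset of $W$ which is an $\varepsilon$-net for $W$, and the packing number $\mathcal M_\varepsilon(W)$ is the maximal cardinality of an $\varepsilon$-distinguishable subset of $W$. For arbitrary $W,A\subseteq X$: $\hat{\mathcal N}^A_\varepsilon(W)$ is the minimal cardinality of an $\varepsilon$-net $C\subseteq A$ for $W$; $\hat{\mathcal N}_\varepsilon(W):=\hat{\mathcal N}^W_\varepsilon(W)$; $\hat{\mathcal M}_\varepsilon(W)$ is the smallest cardinality of an $\varepsilon$-distinguishable $A\subseteq W$ that is maximal under inclusion among $\varepsilon$-distinguishable subsets of $W$; $\mathcal M^*_\varepsilon(W)$ is the smallest cardinal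 $\ge\operatorname{card}(A)$ for every $\varepsilon$-distinguishable $A\subseteq W$. *)

(* Defs.v *)
From Stdlib Require Import Reals List.
Open Scope R_scope.

Section Defs.
Context {X : Type} (d : X -> X -> R).

Definition is_metric : Prop :=
  (forall x y, d x y = 0 <-> x = y) /\
  (forall x y, d x y = d y x) /\
  (forall x y z, d x y <= d x z + d z y).

Definition ultrametric : Prop :=
  forall x y z, d x y <= Rmax (d x z) (d z y).

Definition subset (A B : X -> Prop) : Prop := forall x, A x -> B x.

Definition cball (c : X) (r : R) (x : X) : Prop := d x c <= r.

Definition is_net (eps : R) (W C : X -> Prop) : Prop :=
  forall w, W w -> exists c, C c /\ cball c eps w.

Definition distinguishable (eps : R) (A : X -> Prop) : Prop :=
  forall x y, A x -> A y -> x <> y -> eps < d x y.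

Definition is_open (U : X -> Prop) : Prop :=
  forall x, U x -> exists r, 0 < r /\ forall y, d y x < r -> U y.

Definition m_compact (W : X -> Prop) : Prop :=
  forall (I : Type) (U : I -> X -> Prop),
    (forall i, is_open (U i)) ->
    (forall w, W w -> exists i, U i w) ->
    exists l : list I, forall w, W w -> exists i, In i l /\ U i w.

Definition cov_num (eps : R) (W : X -> Prop) (n : nat) : Prop :=
  (exists l : list X, NoDup l /\ length l = n /\ (forall x, In x l -> W x)
     /\ is_net eps W (fun c => In c l)) /\
  (forall l : list X, NoDup l -> (forall x, In x l -> W x) ->
     is_net eps W (fun c => In c l) -> (n <= length l)%nat).

Definition pack_num (eps : R) (W : X -> Prop) (n : nat) : Prop :=
  (exists l : list X, NoDup l /\ length l = n /\ (forall x, In x l -> W x)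
     /\ distinguishable eps (fun c => In c l)) /\
  (forall l : list X, NoDup l -> (forall x, In x l -> W x) ->
     distinguishable eps (fun c => In c l) -> (length l <= n)%nat).

End Defs.

Definition card_le {T U : Type} (A : T -> Prop) (B : U -> Prop) : Prop :=
  exists f : T -> U, (forall x, A x -> B (f x)) /\
    (forall x y, A x -> A y -> f x = f y -> x = y).

Definition card_eq {T U : Type} (A : T -> Prop) (B : U -> Prop) : Prop :=
  exists f : T -> U, (forall x, A x -> B (f x)) /\
    (forall x y, A x -> A y -> f x = f y -> x = y) /\
    (forall y, B y -> exists x, A x /\ f x = y).

Section Cardinals.
Context {X : Type} (d : X -> X -> R).

(* "hat N^A_eps(W) has cardinality card K": there is an eps-net C ⊆ A for W
   of minimal cardinality among such nets, and card C = card K *)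
Definition Nhat_val (eps : R) (A W : X -> Prop) (K : X -> Prop) : Prop :=
  exists C, subset C A /\ is_net d eps W C /\
    (forall C', subset C' A -> is_net d eps W C' -> card_le C C') /\
    card_eq C K.

Definition maximal_distinguishable (eps : R) (W A : X -> Prop) : Prop :=
  subset A W /\ distinguishable d eps A /\
  (forall B, subset B W -> distinguishable d eps B -> subset A B -> subset B A).

Definition Mhat_val (eps : R) (W : X -> Prop) (K : X -> Prop) : Prop :=
  exists A, maximal_distinguishable eps W A /\
    (forall A', maximal_distinguishable eps W A' -> card_le A A') /\
    card_eq A K.

(* "M*_eps(W) has cardinality card K": card K is an upper bound of the
   cardinalities of eps-distinguishable subsets of W, and is below every
   such upper bound (cardinals of sets of any type) *)
Definition Mstar_val (eps : R) (W : X -> Prop) (K : X -> Prop) : Prop :=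
  (forall A, subset A W -> distinguishable d eps A -> card_le A K) /\
  (forall (U : Type) (K' : U -> Prop),
     (forall A, subset A W -> distinguishable d eps A -> card_le A K') ->
     card_le K K').

End Cardinals.

(* Main.v *)
Require Import Defs.
From Stdlib Require Import Reals List Lra Classical ClassicalEpsilon FunctionalExtensionality PropExtensionality.
Open Scope R_scope.

Section Aux.
Context {X : Type} (d : X -> X -> R) (Hd : is_metric d).

Lemma d_refl x : d x x = 0.
Proof. destruct Hd as [H _]. apply H; reflexivity. Qed.

Lemma d_sym x y : d x y = d y x.
Proof. destruct Hd as [_ [H _]]. apply H. Qed.

Lemma d_nonneg x y : 0 <= d x y.
Proof.
  destruct Hd as [H1 [H2 H3]]. pose proof (H3 x x y). rewrite d_refl in H.
  rewrite (H2 y x) in H. lra.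
Qed.

Lemma d_eq0 x y : d x y = 0 -> x = y.
Proof. destruct Hd as [H _]. apply H. Qed.

Lemma chain (Hu : ultrametric d) eps a b c : d a b <= eps -> d b c <= eps -> d a c <= eps.
Proof. intros. eapply Rle_trans. apply (Hu a c b). apply Rmax_lub; auto. Qed.

Lemma count_le (A B : list X) (Rl : X -> X -> Prop) :
  NoDup A -> (forall a, In a A -> exists b, In b B /\ Rl a b) ->
  (forall a a' b, In a A -> In a' A -> Rl a b -> Rl a' b -> a = a') ->
  (length A <= length B)%nat.
Proof.
  intros HN Hex Hinj.
  set (f := fun a => epsilon (inhabits a) (fun b => In b B /\ Rl a b)).
  assert (Hf : forall a, In a A -> In (f a) B /\ Rl a (f a)).
  { intros a Ha. unfold f. apply epsilon_spec. auto. }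
  rewrite <- (length_map f A).
  apply NoDup_incl_length.
  - clear Hex. induction A as [|a A IH]; simpl; constructor.
    + inversion HN; subst. intro Hin. apply in_map_iff in Hin.
      destruct Hin as [a' [Heq Ha']].
      assert (a' = a).
      { apply (Hinj a' a (f a)); simpl; auto.
        rewrite <- Heq. apply Hf; simpl; auto. apply Hf; simpl; auto. }
      subst. contradiction.
    + inversion HN; subst. apply IH; auto.
      * intros. apply (Hinj a0 a' b); simpl; auto.
      * intros. apply Hf; simpl; auto.
  - intros b Hb. apply in_map_iff in Hb. destruct Hb as [a [<- Ha]]. apply Hf; auto.
Qed.

Lemma dist_inj (Hu : ultrametric d) eps (A : X -> Prop) :
  distinguishable d eps A -> forall a a' b, A a -> A a' -> d a b <= eps -> d a' b <= eps -> a = a'.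
Proof.
  intros HA a a' b H1 H2 H3 H4.
  destruct (classic (a = a')) as [|Hne]; auto.
  specialize (HA a a' H1 H2 Hne).
  assert (d a a' <= eps). { apply (chain Hu eps a b a'); auto. rewrite d_sym; auto. }
  lra.
Qed.

Lemma net_card_le (Hu : ultrametric d) eps (W K C : X -> Prop) :
  subset K W -> distinguishable d eps K -> is_net d eps W C -> card_le K C.
Proof.
  intros HKW HK HC.
  exists (fun x => epsilon (inhabits x) (fun c => C c /\ cball d c eps x)).
  assert (Hs : forall x, K x -> C (epsilon (inhabits x) (fun c => C c /\ cball d c eps x)) /\
                                 cball d (epsilon (inhabits x) (fun c => C c /\ cball d c eps x)) eps x).
  { intros x Hx. apply epsilon_spec. apply HC. auto. }
  split.
  - intros x Hx. apply Hs; auto.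
  - intros x y Hx Hy Heq. destruct (Hs x Hx) as [_ H1]. destruct (Hs y Hy) as [_ H2].
    unfold cball in *. rewrite Heq in H1.
    apply (dist_inj Hu eps K HK x y _ Hx Hy H1 H2).
Qed.

Lemma maxdist_net eps (W A : X -> Prop) (He : 0 <= eps) :
  maximal_distinguishable d eps W A -> is_net d eps W A.
Proof.
  intros [HAW [HA Hmax]] w Hw.
  apply NNPP. intro Hno.
  assert (Hfar : forall a, A a -> eps < d w a).
  { intros a Ha. apply Rnot_le_lt. intro Hle. apply Hno. exists a. split; auto. }
  assert (HB : subset (fun x => A x \/ x = w) A).
  { apply Hmax.
    - intros x [Hx| ->]; auto.
    - intros x y [Hx| ->] [Hy| ->] Hne.
      + apply HA; auto.
      + apply Hfar in Hx. rewrite d_sym. auto.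
      + apply Hfar; auto.
      + congruence.
    - intros x Hx; auto. }
  apply Hno. exists w. split. apply HB; right; auto. unfold cball. rewrite d_refl. lra.
Qed.

Lemma build_list (Hu : ultrametric d) eps (W : X -> Prop) (l : list X) :
  exists L, NoDup L /\ (forall x, In x L -> W x) /\ distinguishable d eps (fun c => In c L) /\
    (forall w, W w -> (exists c, In c l /\ d w c <= eps) -> exists a, In a L /\ d w a <= eps).
Proof.
  induction l as [|c l IH].
  - exists nil. split; [constructor|]. split; [intros x []|]. split.
    + intros x y [].
    + intros w _ [c [[] _]].
  - destruct IH as [L [HN [HW [HD Hc]]]].
    destruct (classic (exists w0, W w0 /\ d w0 c <= eps /\ ~ exists a, In a L /\ d w0 a <= eps))
      as [[w0 [Hw0 [Hw0c Hno]]] | Hnot].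
    + assert (Hfar : forall a, In a L -> eps < d w0 a).
      { intros a Ha. apply Rnot_le_lt. intro. apply Hno. eauto. }
      exists (w0 :: L). repeat split.
      * constructor; auto. intro Hin. apply Hfar in Hin. rewrite d_refl in Hin.
        pose proof (d_nonneg w0 c). lra.
      * intros x [<-|Hx]; auto.
      * intros x y [<-|Hx] [<-|Hy] Hne; try congruence.
        -- apply Hfar; auto.
        -- rewrite d_sym. apply Hfar; auto.
        -- apply HD; auto.
      * intros w Hw [c' [[<-|Hc'] Hwc]].
        -- exists w0. split. left; auto. apply (chain Hu eps w c w0); auto. rewrite d_sym; auto.
        -- destruct (Hc w Hw) as [a [Ha Hwa]]; eauto. exists a; split; simpl; auto.
    + exists L. repeat split; auto.
      intros w Hw [c' [[<-|Hc'] Hwc]].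
      * apply NNPP. intro Hno. apply Hnot. exists w. repeat split; auto.
      * apply Hc; eauto.
Qed.

End Aux.

Theorem theorem2p9 (X : Type) (d : X -> X -> R) (Hd : is_metric d) :
  (ultrametric d <->
   (forall (W : X -> Prop) (eps : R), 0 < eps ->
      exists K : X -> Prop,
        Mstar_val d eps W K /\
        Nhat_val d eps (fun _ => True) W K /\
        Nhat_val d eps W W K /\
        Mhat_val d eps W K)) /\
  (ultrametric d <->
   (forall (W : X -> Prop) (eps : R), m_compact d W -> 0 < eps ->
      exists n : nat, cov_num d eps W n /\ pack_num d eps W n)).
Proof.
  assert (Hnu : ~ ultrametric d -> exists x y z, Rmax (d x z) (d z y) < d x y /\
                  0 < Rmax (d x z) (d z y) /\ x <> y).
  { intro Hn. apply NNPP. intro Hno. apply Hn. intros x y z.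
    apply Rnot_lt_le. intro Hlt. apply Hno. exists x, y, z. split; auto.
    assert (Hxy : x <> y). { intro; subst. rewrite (d_refl d Hd) in Hlt.
      pose proof (d_nonneg d Hd y z). pose proof (Rmax_l (d y z) (d z y)). lra. }
    split; auto.
    pose proof (d_nonneg d Hd x z). pose proof (Rmax_l (d x z) (d z y)).
    pose proof (Rmax_r (d x z) (d z y)).
    assert (H0le : 0 <= Rmax (d x z) (d z y)) by lra.
    destruct (Rle_lt_or_eq_dec 0 (Rmax (d x z) (d z y)) H0le) as [|He]; [assumption|].
    exfalso. apply Hxy. assert (x = z) by (apply (d_eq0 d Hd); pose proof (d_nonneg d Hd z y); lra).
    assert (z = y) by (apply (d_eq0 d Hd); pose proof (d_nonneg d Hd z y); lra). congruence. }
  split; split.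
  -
    intros Hu W eps Heps.
    set (cls := fun w => fun x => W x /\ d x w <= eps).
    set (rep := fun w => epsilon (inhabits w) (cls w)).
    assert (Hrep : forall w, W w -> W (rep w) /\ d (rep w) w <= eps).
    { intros w Hw. apply (epsilon_spec (inhabits w) (cls w)). exists w. split; auto.
      rewrite (d_refl d Hd). lra. }
    assert (Hrepeq : forall w1 w2, W w1 -> W w2 -> d w1 w2 <= eps -> rep w1 = rep w2).
    { intros w1 w2 H1 H2 H12. unfold rep.
      assert (cls w1 = cls w2).
      { apply functional_extensionality. intro x. apply propositional_extensionality.
        unfold cls. split; intros [Hx Hd']; split; auto.
        - apply (chain d Hu eps x w1 w2); auto.
        - apply (chain d Hu eps x w2 w1); auto. rewrite (d_sym d Hd); auto. }
      rewrite H. apply epsilon_inh_irrelevance. exists w2. split; auto.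
      rewrite (d_refl d Hd). lra. }
    set (K := fun x => exists w, W w /\ x = rep w).
    assert (HKW : subset K W). { intros x [w [Hw ->]]. apply Hrep; auto. }
    assert (HKd : distinguishable d eps K).
    { intros x y [w1 [Hw1 ->]] [w2 [Hw2 ->]] Hne. apply Rnot_le_lt. intro Hle.
      apply Hne. apply Hrepeq; auto.
      destruct (Hrep w1 Hw1) as [_ A1]. destruct (Hrep w2 Hw2) as [_ A2].
      apply (chain d Hu eps w1 (rep w1) w2). rewrite (d_sym d Hd); auto.
      apply (chain d Hu eps (rep w1) (rep w2) w2); auto. }
    assert (HKn : is_net d eps W K).
    { intros w Hw. exists (rep w). split. exists w; auto. unfold cball.
      rewrite (d_sym d Hd). apply Hrep; auto. }
    assert (HKmax : maximal_distinguishable d eps W K).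
    { split; [auto|split; [auto|]]. intros B HBW HB HKB b Hb.
      destruct (classic (b = rep b)) as [Heq|Hne].
      - rewrite Heq. exists b. split; auto.
      - exfalso. assert (Hr : B (rep b)). { apply HKB. exists b. split; auto. }
        specialize (HB b (rep b) Hb Hr Hne). rewrite (d_sym d Hd) in HB.
        destruct (Hrep b (HBW b Hb)). lra. }
    assert (Hceq : card_eq K K).
    { exists (fun x => x). repeat split; auto. intros y Hy. exists y; auto. }
    exists K. split; [|split; [|split]].
    + split.
      * intros A HAW HA. exists rep. split.
        -- intros x Hx. exists x. split; auto.
        -- intros x y Hx Hy Heq.
           apply (dist_inj d Hd Hu eps A HA x y (rep x) Hx Hy).
           ++ rewrite (d_sym d Hd). apply Hrep; auto.
           ++ rewrite Heq. rewrite (d_sym d Hd). apply Hrep; auto.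
      * intros U K' HK'. apply HK'; auto.
    + exists K. split; [intros x _; auto|]. split; auto. split; auto.
      intros C' _ HC'. apply (net_card_le d Hd Hu eps W); auto.
    + exists K. split; auto. split; auto. split; auto.
      intros C' _ HC'. apply (net_card_le d Hd Hu eps W); auto.
    + exists K. split; auto. split; auto.
      intros A' HA'. apply (net_card_le d Hd Hu eps W); auto. apply maxdist_net; auto; lra.
  -
    intro H. apply NNPP. intro Hn. destruct (Hnu Hn) as [x [y [z [Hlt [Hpos Hxy]]]]].
    set (eps := Rmax (d x z) (d z y)) in *.
    set (W := fun w => w = x \/ w = y \/ w = z).
    destruct (H W eps Hpos) as [K [[HM1 _] [_ [HN _]]]].
    destruct (HM1 (fun w => w = x \/ w = y)) as [g [Hg1 Hg2]].
    + intros w [->| ->]; unfold W; auto.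
    + intros a b [->| ->] [->| ->] Hne; try congruence; first [lra | rewrite (d_sym d Hd); lra].
    + destruct HN as [C [HCW [HCn [HCmin [f [Hf1 [Hf2 Hf3]]]]]]].
      destruct (HCmin (fun w => w = z)) as [h [Hh1 Hh2]].
      * intros w ->. unfold W; auto.
      * intros w [->|[->| ->]]; exists z; split; auto; unfold cball.
        -- apply Rmax_l.
        -- rewrite (d_sym d Hd). apply Rmax_r.
        -- rewrite (d_refl d Hd). lra.
      * destruct (Hf3 (g x)) as [cx [Hcx Hfx]]. apply Hg1; auto.
        destruct (Hf3 (g y)) as [cy [Hcy Hfy]]. apply Hg1; auto.
        assert (cx = cy). { apply Hh2; auto. rewrite (Hh1 cx Hcx), (Hh1 cy Hcy). auto. }
        subst cy. rewrite Hfx in Hfy. apply Hg2 in Hfy; auto.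
  -
    intros Hu W eps Hc Heps.
    destruct (Hc X (fun c => cball d c eps)) as [l Hl].
    + intros c x Hx. exists eps. split; auto. intros y Hy. unfold cball in *.
      apply (chain d Hu eps y x c); lra.
    + intros w Hw. exists w. unfold cball. rewrite (d_refl d Hd). lra.
    + destruct (build_list d Hd Hu eps W l) as [L [HN [HW [HD Hcov]]]].
      assert (HLn : is_net d eps W (fun c => In c L)).
      { intros w Hw. destruct (Hcov w Hw) as [a [Ha Hwa]]. apply Hl; auto. exists a; auto. }
      exists (length L). split; split.
      * exists L. repeat split; auto.
      * intros l' HN' HW' Hn'. apply (count_le L l' (fun a b => d a b <= eps)); auto.
        -- intros a Ha. apply Hn'. auto.
        -- intros a a' b Ha Ha' H1 H2. apply (dist_inj d Hd Hu eps _ HD a a' b); auto.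
      * exists L. repeat split; auto.
      * intros l' HN' HW' HD'. apply (count_le l' L (fun a b => d a b <= eps)); auto.
        -- intros a Ha. apply HLn. auto.
        -- intros a a' b Ha Ha' H1 H2. apply (dist_inj d Hd Hu eps _ HD' a a' b); auto.
  -
    intro H. apply NNPP. intro Hn. destruct (Hnu Hn) as [x [y [z [Hlt [Hpos Hxy]]]]].
    set (eps := Rmax (d x z) (d z y)) in *.
    set (W := fun w => w = x \/ w = y \/ w = z).
    assert (Hcomp : m_compact d W).
    { intros I U _ Hcov.
      destruct (Hcov x) as [ix Hix]. unfold W; auto.
      destruct (Hcov y) as [iy Hiy]. unfold W; auto.
      destruct (Hcov z) as [iz Hiz]. unfold W; auto.
      exists (ix :: iy :: iz :: nil). intros w [->|[->| ->]].
      - exists ix; simpl; auto.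
      - exists iy; simpl; auto.
      - exists iz; simpl; auto. }
    destruct (H W eps Hcomp Hpos) as [n [[_ Hc] [_ Hp]]].
    assert (n <= 1)%nat.
    { apply (Hc (z :: nil)).
      - constructor; auto. constructor.
      - intros w [<-|[]]. unfold W; auto.
      - intros w [->|[->| ->]]; exists z; split; simpl; auto; unfold cball.
        + apply Rmax_l.
        + rewrite (d_sym d Hd). apply Rmax_r.
        + rewrite (d_refl d Hd). lra. }
    assert (2 <= n)%nat.
    { apply (Hp (x :: y :: nil)).
      - constructor. intros [Hh|[]]; auto. constructor; auto. constructor.
      - intros w [<-|[<-|[]]]; unfold W; auto.
      - intros a b [<-|[<-|[]]] [<-|[<-|[]]] Hne; try congruence; first [lra | rewrite (d_sym d Hd); lra]. }
    apply (PeanoNat.Nat.nle_succ_diag_l 1). eapply PeanoNat.Nat.le_trans; eassumption.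
Qed.
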